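(* Let $G$ be a countable multiplicatively written Abelian group, $\phi$ a height on $G$, $\alpha\in G$, and let $K\subseteq(0,\infty)$ be uncountable such that for every $t\in K$ the infimum in the definition of $\phi_t(\alpha)$ is attained. Then $K$ is uniform if and only if there exists $(\alpha_1,\alpha_2,\ldots)\in G^\infty$ such that $\alpha=\prod_{n=1}^\infty\alpha_n$ and $\phi_t(\alpha)=(\sum_{n=1}^\infty\phi(\alpha_n)^t)^{1/t}$ for all $t\in K$.
   Context: A height on $G$ is a map $\phi:G\to[0,\infty)$ with $\phi(e)=0$ and $\phi(\beta)=\phi(\beta^{-1})$. $G^\infty$ is the set of sequences in $G$ with all but finitely many terms equal to the identity. $\mathbb R^\infty$ is the set of finitely supported real sequences, $\|\mathbf x\|_t=(\sum_n|x_n|^t)^{1/t}$. $\phi_t(\alpha)=\inf\{(\sum_n\phi(\alpha_n)^t)^{1/t}:(\alpha_n)\in G^\infty,\ \prod_n\alpha_n=\alpha\}$, and the infimum is attained if some such sequence achieves it. A set $K\subseteq(0,\infty)$ is uniform if there exists $\mathbf x\in\mathbb R^\infty$ with $\phi_t(\alpha)=\|\mathbf x\|_t$ for all $t\in K$. *)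

(* Defs.v *)
From Stdlib Require Import Reals ClassicalEpsilon.
Open Scope R_scope.

(* t-th power for x >= 0, with the convention 0^t = 0 (t > 0).
   (Stdlib's Rpower 0 t = 1, hence the explicit case.) *)
Definition powt (x t : R) : R :=
  if Req_EM_T x 0 then 0 else Rpower x t.

Fixpoint sumR (f : nat -> R) (N : nat) : R :=
  match N with O => 0 | S n => sumR f n + f n end.

Fixpoint prodG {G : Type} (mul : G -> G -> G) (e : G) (a : nat -> G) (N : nat) : G :=
  match N with O => e | S n => mul (prodG mul e a n) (a n) end.

(* (a_n) in G^infty (terms equal e from N on) with product alpha *)
Definition fin_rep {G : Type} (mul : G -> G -> G) (e : G) (alpha : G)
  (a : nat -> G) (N : nat) : Prop :=
  (forall n, (N <= n)%nat -> a n = e) /\ prodG mul e a N = alpha.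

Definition phi_sum {G : Type} (phi : G -> R) (a : nat -> G) (N : nat) (t : R) : R :=
  powt (sumR (fun n => powt (phi (a n)) t) N) (1 / t).

Definition is_inf (S : R -> Prop) (v : R) : Prop :=
  (forall y, S y -> v <= y) /\ (forall w, (forall y, S y -> w <= y) -> w <= v).

Definition phi_t {G : Type} (mul : G -> G -> G) (e : G) (phi : G -> R)
  (t : R) (alpha : G) : R :=
  epsilon (inhabits 0%R)
    (is_inf (fun v => exists a N, fin_rep mul e alpha a N /\ v = phi_sum phi a N t)).

Definition inf_attained {G : Type} (mul : G -> G -> G) (e : G) (phi : G -> R)
  (t : R) (alpha : G) : Prop :=
  exists a N, fin_rep mul e alpha a N /\ phi_t mul e phi t alpha = phi_sum phi a N t.

(* ||x||_t for x in R^infty, x_n = 0 for n >= N *)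
Definition norm_t (x : nat -> R) (N : nat) (t : R) : R :=
  powt (sumR (fun n => powt (Rabs (x n)) t) N) (1 / t).

Definition uniform {G : Type} (mul : G -> G -> G) (e : G) (phi : G -> R)
  (alpha : G) (K : R -> Prop) : Prop :=
  exists (x : nat -> R) (N : nat), (forall n, (N <= n)%nat -> x n = 0) /\
    forall t, K t -> phi_t mul e phi t alpha = norm_t x N t.

(* Main.v *)
Require Import Defs.
From Stdlib Require Import Reals.
From Stdlib Require Import Reals Lra Lia List Classical ClassicalEpsilon Cantor.
Import ListNotations.
Open Scope R_scope.

Definition E (ps : list (R*R)) (t : R) : R :=
  fold_right (fun p acc => fst p * exp (snd p * t) + acc) 0 ps.
Definition D (ps : list (R*R)) := map (fun p => (fst p * snd p, snd p)) ps.
Definition shift (l : R) (ps : list (R*R)) := map (fun p => (fst p, snd p - l)) ps.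

Lemma deriv_cexp c l t : derivable_pt_lim (fun t => c * exp (l * t)) t (c * l * exp (l * t)).
Proof.
  assert (H1 : derivable_pt_lim (fun t => l * t) t l).
  { pose proof (derivable_pt_lim_scal id l t 1 (derivable_pt_lim_id t)) as H.
    rewrite Rmult_1_r in H. exact H. }
  assert (H2 := derivable_pt_lim_comp (fun t => l * t) exp t l (exp (l * t)) H1 (derivable_pt_lim_exp _)).
  replace (c * l * exp (l * t)) with (c * (exp (l * t) * l)) by ring.
  apply (derivable_pt_lim_scal (comp exp (fun t => l * t)) c t). exact H2.
Qed.

Lemma E_deriv ps t : derivable_pt_lim (E ps) t (E (D ps) t).
Proof.
  induction ps as [|[c l] ps IH].
  - simpl. apply derivable_pt_lim_const.
  - simpl. apply (derivable_pt_lim_plus (fun t => c * exp (l * t)) (E ps)).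
    + apply deriv_cexp.
    + exact IH.
Qed.

Lemma E_app l1 l2 t : E (l1 ++ l2) t = E l1 t + E l2 t.
Proof. induction l1 as [|p l1 IH]; simpl; [ring| rewrite IH; ring]. Qed.

Lemma E_shift lam ps t : E (shift lam ps) t = E ps t * exp (- lam * t).
Proof.
  induction ps as [|[c l] ps IH]; simpl.
  - ring.
  - unfold shift in *. simpl. rewrite IH.
    replace ((l - lam) * t) with (l * t + - lam * t) by ring.
    rewrite exp_plus. ring.
Qed.

Fixpoint inc (l : list R) : Prop :=
  match l with nil => True | x :: l' => Forall (fun y => x < y) l' /\ inc l' end.

Lemma rolle_list (g dg : R -> R) (Hd : forall t, derivable_pt_lim g t (dg t)) :
  forall l x, inc (x :: l) -> Forall (fun t => g t = 0) (x :: l) ->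
  exists l', length l' = length l /\ inc l' /\ Forall (fun y => x < y) l' /\
             Forall (fun t => dg t = 0) l'.
Proof.
  induction l as [|y l IH]; intros x Hi Hz.
  - exists nil. repeat split; constructor.
  - destruct Hi as [Hx Hi]. inversion Hx as [|? ? Hxy Hxl]; subst.
    inversion Hz as [|? ? Hgx Hz']; subst. inversion Hz' as [|? ? Hgy Hzl]; subst.
    pose (pr := fun z (_ : x < z < y) => (exist _ (dg z) (Hd z) : derivable_pt g z)).
    destruct (Rolle g x y pr) as [c [P Hc]].
    + intros z _. apply derivable_continuous_pt. exact (exist _ (dg z) (Hd z)).
    + exact Hxy.
    + congruence.
    + simpl in Hc.
      destruct (IH y Hi Hz') as [l2 [Hlen [Hinc [Hgt Hzero]]]].
      exists (c :: l2). simpl. split; [lia|]. split; [split; auto|].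
      * apply (Forall_impl _ (fun z H => Rlt_trans _ _ _ (proj2 P) H)) in Hgt. exact Hgt.
      * split.
        -- constructor; [lra|]. eapply Forall_impl; [|exact Hgt]. intros z Hz0; simpl in *; lra.
        -- constructor; auto.
Qed.

Lemma zeros_bound : forall n ps, length ps = n ->
  (forall t, E ps t = 0) \/
  (forall l, inc l -> Forall (fun t => E ps t = 0) l -> (length l < n)%nat).
Proof.
  induction n as [|n IHn]; intros ps Hlen.
  - destruct ps; [|discriminate]. left; intros; reflexivity.
  - destruct ps as [|[c lam] ps']; [discriminate|]. simpl in Hlen.
    destruct (classic (forall t, E ((c,lam)::ps') t = 0)) as [Hall|Hnot]; [left; exact Hall|right].
    intros l Hl Hz. destruct l as [|t0 l]; [simpl; lia|].
    set (h := E (shift lam ps')).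
    set (g := fun t => c + h t).
    assert (Hg : forall t, g t = E ((c,lam)::ps') t * exp (- lam * t)).
    { intro t. unfold g, h. rewrite E_shift. simpl.
      replace (c * exp (lam * t) + E ps' t) with (c * exp (lam * t) + E ps' t) by ring.
      rewrite Rmult_plus_distr_r. rewrite Rmult_assoc, <- exp_plus.
      replace (lam * t + - lam * t) with 0 by ring. rewrite exp_0. ring. }
    assert (Hgz : forall t, E ((c,lam)::ps') t = 0 -> g t = 0).
    { intros t Ht. rewrite Hg, Ht. ring. }
    assert (Hdg : forall t, derivable_pt_lim g t (0 + E (D (shift lam ps')) t)).
    { intro t. unfold g. apply (derivable_pt_lim_plus (fun _ => c) h).
      - apply derivable_pt_lim_const.
      - apply E_deriv. }
    assert (HlenD : length (D (shift lam ps')) = n).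
    { unfold D, shift. rewrite !length_map. lia. }
    destruct (IHn _ HlenD) as [H0|Hb].
    + exfalso. apply Hnot. intro t.
      assert (Hc : constant h).
      { apply (null_derivative_1 h (fun t => exist _ _ (E_deriv (shift lam ps') t))).
        intro x. simpl. apply H0. }
      assert (Hg0 : g t0 = 0). { apply Hgz. inversion Hz; auto. }
      assert (Hgt : g t = 0). { unfold g in *. rewrite (Hc t t0). exact Hg0. }
      rewrite Hg in Hgt. apply Rmult_integral in Hgt. destruct Hgt as [H|H]; auto.
      pose proof (exp_pos (- lam * t)). lra.
    + destruct (rolle_list g _ Hdg l t0 Hl) as [l' [Hlen' [Hinc' [_ Hz']]]].
      * eapply Forall_impl; [|exact Hz]. exact Hgz.
      * assert (length l' < n)%nat.
        { apply Hb; auto. eapply Forall_impl; [|exact Hz']. intros a Ha; simpl in Ha; lra. }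
        simpl. lia.
Qed.

Fixpoint ins (z : R) (l : list R) : list R :=
  match l with nil => [z] | x :: l' => if Rlt_dec z x then z :: x :: l' else x :: ins z l' end.

Lemma ins_In z l y : In y (ins z l) <-> y = z \/ In y l.
Proof.
  induction l as [|x l IH]; simpl.
  - intuition.
  - destruct (Rlt_dec z x); simpl; rewrite ?IH; intuition.
Qed.

Lemma ins_len z l : length (ins z l) = S (length l).
Proof. induction l as [|x l IH]; simpl; auto. destruct (Rlt_dec z x); simpl; auto. Qed.

Lemma ins_inc z l : inc l -> ~ In z l -> inc (ins z l).
Proof.
  induction l as [|x l IH]; intros Hi Hn; simpl.
  - split; constructor.
  - destruct Hi as [Hx Hi]. destruct (Rlt_dec z x) as [Hlt|Hge].
    + split; [|split; auto]. constructor; auto.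
      eapply Forall_impl; [|exact Hx]. intros a Ha; simpl in *; lra.
    + split.
      * apply Forall_forall. intros y Hy. apply ins_In in Hy. destruct Hy as [->|Hy].
        -- assert (z <> x) by (intro; apply Hn; left; auto). lra.
        -- rewrite Forall_forall in Hx. apply Hx; auto.
      * apply IH; auto. intro; apply Hn; right; auto.
Qed.

Lemma maxP (P : nat -> Prop) : forall B, (forall j, P j -> (j <= B)%nat) -> P 0%nat ->
  exists k, P k /\ forall j, P j -> (j <= k)%nat.
Proof.
  induction B as [|B IH]; intros HB H0.
  - exists 0%nat. split; auto.
  - destruct (classic (P (S B))) as [HS|HS].
    + exists (S B); auto.
    + apply IH; auto. intros j Hj. assert (j <= S B)%nat by auto.
      destruct (Nat.eq_dec j (S B)); [subst; contradiction|lia].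
Qed.

Lemma fin_from_bound (Z : R -> Prop) m :
  (forall l, inc l -> Forall Z l -> (length l < m)%nat) -> exists L, forall t, Z t -> In t L.
Proof.
  intros Hb.
  destruct (maxP (fun k => exists l, inc l /\ Forall Z l /\ length l = k) m) as [k [[l [Hi [Hz Hl]]] Hmax]].
  - intros j [l [Hi [Hz Hl]]]. specialize (Hb l Hi Hz). lia.
  - exists nil. simpl. repeat split; constructor.
  - exists l. intros t Zt. destruct (classic (In t l)) as [H|H]; auto. exfalso.
    assert (S k <= k)%nat; [|lia].
    apply Hmax. exists (ins t l). split; [apply ins_inc; auto|]. split.
    + apply Forall_forall. intros y Hy. apply ins_In in Hy. destruct Hy as [->|Hy]; auto.
      rewrite Forall_forall in Hz; auto.
    + rewrite ins_len; lia.
Qed.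

Lemma sumR_ext (f g : nat -> R) N : (forall n, (n < N)%nat -> f n = g n) -> sumR f N = sumR g N.
Proof. induction N as [|N IH]; intros H; simpl; auto. rewrite IH by (intros; apply H; lia). rewrite H by lia. auto. Qed.

Lemma powt_nonneg u s : 0 <= powt u s.
Proof. unfold powt. destruct (Req_EM_T u 0); [lra|]. unfold Rpower. left; apply exp_pos. Qed.

Lemma powt_inj u v s : 0 <= u -> 0 <= v -> s <> 0 -> powt u s = powt v s -> u = v.
Proof.
  intros Hu Hv Hs. unfold powt.
  destruct (Req_EM_T u 0) as [Hu0|Hu0]; destruct (Req_EM_T v 0) as [Hv0|Hv0]; unfold Rpower.
  - congruence.
  - intro H. pose proof (exp_pos (s * ln v)). lra.
  - intro H. pose proof (exp_pos (s * ln u)). lra.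
  - intro H. apply exp_inv in H. apply Rmult_eq_reg_l in H; auto. apply ln_inv; lra.
Qed.

Fixpoint tl (b : nat -> R) (s : R) (N : nat) : list (R*R) :=
  match N with O => nil
  | S n => (if Req_EM_T (b n) 0 then nil else [(s, ln (b n))]) ++ tl b s n end.

Lemma E_tl b s N t : E (tl b s N) t = s * sumR (fun n => powt (b n) t) N.
Proof.
  induction N as [|N IH]; simpl; [ring|]. rewrite E_app, IH. unfold powt.
  destruct (Req_EM_T (b N) 0); simpl; unfold Rpower; ring_simplify; auto.
  replace (ln (b N) * t) with (t * ln (b N)) by ring. ring.
Qed.

Definition sumG {G : Type} (phi : G -> R) (l : list G) (t : R) : R :=
  fold_right (fun g acc => powt (phi g) t + acc) 0 l.

Lemma sumG_app {G : Type} (phi : G -> R) l1 l2 t : sumG phi (l1 ++ l2) t = sumG phi l1 t + sumG phi l2 t.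
Proof. induction l1 as [|g l1 IH]; simpl; [ring|]. unfold sumG in *. simpl. rewrite IH. ring. Qed.

Lemma sumR_map {G : Type} (phi : G -> R) (a : nat -> G) N t :
  sumR (fun n => powt (phi (a n)) t) N = sumG phi (map a (seq 0 N)) t.
Proof.
  induction N as [|N IH]; [reflexivity|]. rewrite seq_S, map_app, sumG_app, <- IH.
  simpl. unfold sumG. simpl. ring.
Qed.

Fixpoint tlG {G : Type} (phi : G -> R) (l : list G) : list (R*R) :=
  match l with nil => nil
  | g :: l' => (if Req_EM_T (phi g) 0 then nil else [(1, ln (phi g))]) ++ tlG phi l' end.

Lemma E_tlG {G : Type} (phi : G -> R) l t : E (tlG phi l) t = sumG phi l t.
Proof.
  induction l as [|g l IH]; simpl; [reflexivity|]. rewrite E_app, IH. unfold sumG; simpl.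
  fold (sumG phi l t). unfold powt.
  destruct (Req_EM_T (phi g) 0); simpl; unfold Rpower; [ring|].
  replace (ln (phi g) * t) with (t * ln (phi g)) by ring. ring.
Qed.

Fixpoint idx (z : R) (l : list R) : nat :=
  match l with nil => O | y :: l' => if Req_EM_T z y then O else S (idx z l') end.

Lemma idx_nth z l : In z l -> nth (idx z l) l 0 = z.
Proof.
  induction l as [|y l IH]; simpl; [tauto|]. intros H.
  destruct (Req_EM_T z y); [auto|]. apply IH. destruct H; [congruence|auto].
Qed.

Fixpoint enc (l : list nat) : nat :=
  match l with nil => O | x :: l' => S (Cantor.to_nat (x, enc l')) end.

Lemma enc_inj l1 l2 : enc l1 = enc l2 -> l1 = l2.
Proof.
  revert l2; induction l1 as [|x l1 IH]; intros [|y l2]; try discriminate; auto.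
  intro H. cbn [enc] in H. apply Nat.succ_inj in H. apply to_nat_inj in H. injection H as -> H. f_equal; auto.
Qed.

Lemma map_injF {A B} (f : A -> B) : (forall x y, f x = f y -> x = y) ->
  forall l1 l2, map f l1 = map f l2 -> l1 = l2.
Proof.
  intros Hf. induction l1 as [|x l1 IH]; intros [|y l2]; simpl; try discriminate; auto.
  intro H. injection H as H1 H2. f_equal; auto.
Qed.

Lemma sumG_nonneg {G : Type} (phi : G -> R) l t : 0 <= sumG phi l t.
Proof. induction l; simpl; [lra|]. pose proof (powt_nonneg (phi a) t). unfold sumG in *; simpl; lra. Qed.

Lemma sumR_nonneg (f : nat -> R) N t : 0 <= sumR (fun n => powt (f n) t) N.
Proof. induction N; simpl; [lra|]. pose proof (powt_nonneg (f N) t). lra. Qed.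

Theorem lemma3p4
  (G : Type) (mul : G -> G -> G) (inv : G -> G) (e : G)
  (Hassoc : forall x y z, mul x (mul y z) = mul (mul x y) z)
  (Hcomm : forall x y, mul x y = mul y x)
  (Hid : forall x, mul e x = x)
  (Hinv : forall x, mul (inv x) x = e)
  (Hcountable : exists f : G -> nat, forall x y, f x = f y -> x = y)
  (phi : G -> R)
  (Hphi_nonneg : forall x, 0 <= phi x)
  (Hphi_e : phi e = 0)
  (Hphi_inv : forall x, phi (inv x) = phi x)
  (alpha : G) (K : R -> Prop)
  (HKpos : forall t, K t -> 0 < t)
  (HKuncount : ~ exists f : R -> nat,
       forall s t, K s -> K t -> f s = f t -> s = t)
  (Hattained : forall t, K t -> inf_attained mul e phi t alpha) :
  uniform mul e phi alpha K <->
  exists (a : nat -> G) (N : nat), fin_rep mul e alpha a N /\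
    forall t, K t -> phi_t mul e phi t alpha = phi_sum phi a N t.
Proof.
  split.
  - intros [x [Nx [Hx0 Hu]]].
    destruct Hcountable as [F HF].
    apply NNPP; intro H. apply HKuncount.
    set (X := fun t => sumR (fun n => powt (Rabs (x n)) t) Nx).
    set (spec := fun t (p : (nat -> G) * nat) => fin_rep mul e alpha (fst p) (snd p) /\
                   phi_t mul e phi t alpha = phi_sum phi (fst p) (snd p) t).
    set (rep := fun t => epsilon (inhabits ((fun _ : nat => e), 0%nat)) (spec t)).
    assert (Hrep : forall t, K t -> spec t (rep t)).
    { intros t Kt. apply epsilon_spec. destruct (Hattained t Kt) as [a [N Ha]].
      exists (a, N). exact Ha. }
    set (lst := fun t => map (fst (rep t)) (seq 0 (snd (rep t)))).
    set (Zl := fun (l : list G) t => sumG phi l t = X t).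
    set (Lsel := fun l => epsilon (inhabits (@nil R)) (fun L => forall t, Zl l t -> In t L)).
    assert (HZ : forall t, K t -> Zl (lst t) t).
    { intros t Kt. destruct (Hrep t Kt) as [_ Hp]. rewrite (Hu t Kt) in Hp.
      unfold phi_sum, norm_t in Hp. unfold Zl, lst. rewrite <- sumR_map.
      symmetry. apply powt_inj in Hp; auto using sumR_nonneg.
      pose proof (HKpos t Kt). unfold Rdiv. rewrite Rmult_1_l.
      apply Rinv_neq_0_compat. lra. }
    assert (HL : forall t, K t -> forall s, Zl (lst t) s -> In s (Lsel (lst t))).
    { intros t Kt. apply epsilon_spec.
      set (ps := tlG phi (lst t) ++ tl (fun n => Rabs (x n)) (-1) Nx).
      assert (HE : forall s, E ps s = sumG phi (lst t) s - X s).
      { intro s. unfold ps. rewrite E_app, E_tlG, E_tl. unfold X. ring. }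
      apply (fin_from_bound _ (length ps)).
      destruct (zeros_bound (length ps) ps eq_refl) as [H0|Hb].
      - exfalso. apply H. exists (fst (rep t)), (snd (rep t)).
        split; [apply (Hrep t Kt)|]. intros s Ks. rewrite (Hu s Ks).
        unfold norm_t, phi_sum. f_equal. rewrite (sumR_map phi (fst (rep t))). fold (lst t).
        specialize (H0 s). rewrite HE in H0. unfold X in H0. lra.
      - intros l Hi Hz. apply Hb; auto. eapply Forall_impl; [|exact Hz].
        intros s Hs. rewrite HE. unfold Zl in Hs. lra. }
    exists (fun t => Cantor.to_nat (enc (map F (lst t)), idx t (Lsel (lst t)))).
    intros s t Ks Kt Heq. apply to_nat_inj in Heq. injection Heq as H1 H2.
    apply enc_inj, (map_injF F HF) in H1. rewrite H1 in H2.
    assert (Hs : In s (Lsel (lst t))). { rewrite <- H1. apply HL; auto. }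
    assert (Ht : In t (Lsel (lst t))). { apply HL; auto. }
    apply idx_nth in Hs. apply idx_nth in Ht. rewrite H2 in Hs. congruence.
  - intros [a [N [Hrep Hall]]]. exists (fun n => phi (a n)), N. split.
    + intros n Hn. destruct Hrep as [Hr _]. rewrite Hr; auto.
    + intros t Kt. rewrite Hall by auto. unfold phi_sum, norm_t. f_equal.
      apply sumR_ext. intros n _. rewrite Rabs_pos_eq; auto.
Qed.
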